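(* Let $Q(\mathbf{x})=\mathbf{x}^tM\mathbf{x}$ with $M\in M_d(\mathbb{Z})$ symmetric and $\det M\ne0$. For $g\in\mathrm{SL}_d(\mathbb{Z})$ and $\gamma\in\mathrm{SL}_{d-1}(\mathbb{Q})$, let $\hat g$ be the $d\times(d-1)$ matrix of the first $d-1$ columns of $g$ and $M_{\varphi_g^\gamma}=\gamma^t\hat g^tM^{-1}\hat g\gamma$ (the companion matrix of the form $\mathbf{u}\mapsto Q^*(\hat g\gamma\mathbf{u})$ on $\mathbb{Q}^{d-1}$, where $Q^*(\mathbf{x})=\mathbf{x}^tM^{-1}\mathbf{x}$). Then \[ \det(M_{\varphi_g^\gamma})=\frac{1}{\det M}\,Q(\tau(g)). \]
   Context: $\tau(g)=(g^t)^{-1}\mathbf{e}_d$. *)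

(* Defs.v *)
From mathcomp Require Import all_boot all_order all_algebra.
Set Implicit Arguments. Unset Strict Implicit. Unset Printing Implicit Defensive.
Import Order.TTheory GRing.Theory Num.Theory.
Local Open Scope ring_scope.

(* Dimension convention: d = n.+1, so d - 1 = n. *)

Definition ratmx (m k : nat) (A : 'M[int]_(m, k)) : 'M[rat]_(m, k) :=
  map_mx (fun z : int => z%:~R) A.

Definition qform (d : nat) (M : 'M[rat]_d) (x : 'cV[rat]_d) : rat :=
  (x^T *m M *m x) 0 0.

Definition e_last (n : nat) : 'cV[rat]_n.+1 :=
  \col_(i < n.+1) (i == ord_max)%:R.

Definition tau (n : nat) (g : 'M[int]_n.+1) : 'cV[rat]_n.+1 :=
  invmx (ratmx g)^T *m e_last n.

Definition ghat (n : nat) (g : 'M[int]_n.+1) : 'M[rat]_(n.+1, n) :=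
  \matrix_(i < n.+1, j < n) ratmx g i (widen_ord (leqnSn n) j).

Definition Mphi (n : nat) (M g : 'M[int]_n.+1) (gam : 'M[rat]_n) : 'M[rat]_n :=
  gam^T *m (ghat g)^T *m invmx (ratmx M) *m ghat g *m gam.

(* Main.v *)
Require Import Defs.
From mathcomp Require Import all_boot all_order all_algebra.
Set Implicit Arguments. Unset Strict Implicit. Unset Printing Implicit Defensive.
Import Order.TTheory GRing.Theory Num.Theory.
Local Open Scope ring_scope.

Lemma row'_col'_mul (m k p q : nat) (i : 'I_m.+1) (j : 'I_q.+1)
  (X : 'M[rat]_(k, m.+1)) (Y : 'M[rat]_(k, p)) (Z : 'M[rat]_(p, q.+1)) :
  (col' i X)^T *m Y *m col' j Z = row' i (col' j (X^T *m Y *m Z)).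
Proof.
apply/matrixP => a b; rewrite !mxE; apply: eq_bigr => l _; rewrite !mxE.
congr (_ * _); apply: eq_bigr => r _; rewrite !mxE //.
Qed.

Lemma ghatE n (g : 'M[int]_n.+1) : ghat g = col' ord_max (ratmx g).
Proof.
apply/matrixP => a b; rewrite [LHS]mxE [RHS]mxE; congr (fun_of_matrix _ a _).
by apply/val_inj; rewrite /= /bump leqNgt ltn_ord.
Qed.

Lemma e_lastE n : e_last n = delta_mx ord_max 0.
Proof.
apply/matrixP => a b; rewrite !mxE; by case: b => [[|//] ?]; rewrite andbT.
Qed.

Theorem lemma6p2 (n : nat) (M g : 'M[int]_n.+1) (gam : 'M[rat]_n) :
  M^T = M -> \det M != 0 -> \det g = 1 -> \det gam = 1 ->
  \det (Mphi M g gam) = (\det (ratmx M))^-1 * qform (ratmx M) (tau g).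
Proof.
move=> _ dM dg dgam.
set A := ratmx M; set G := ratmx g.
have dA : \det A = (\det M)%:~R by rewrite /A /ratmx (det_map_mx (intr : {rmorphism int -> rat})).
have dG : \det G = 1 by rewrite /G /ratmx (det_map_mx (intr : {rmorphism int -> rat})) dg.
have uA : A \in unitmx by rewrite unitmxE dA unitfE intr_eq0.
have uG : G \in unitmx by rewrite unitmxE dG unitr1.
have uGT : G^T \in unitmx by rewrite unitmx_tr.
set B := G^T *m invmx A *m G.
have dB : \det B = (\det A)^-1 by rewrite !det_mulmx det_tr det_inv dG mul1r mulr1.
have uB : B \in unitmx by rewrite unitmxE dB unitrV -unitmxE.
have iB : invmx B = invmx G *m A *m invmx G^T.
  have h : B *m (invmx G *m A *m invmx G^T) = 1%:M.
    by rewrite /B !mulmxA mulmxK // mulmxKV // mulmxV.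
  by rewrite -[LHS]mulmx1 -h mulmxA mulVmx // mul1mx.
have -> : \det (Mphi M g gam) = \det ((ghat g)^T *m invmx A *m ghat g).
  rewrite (_ : Mphi M g gam = gam^T *m ((ghat g)^T *m invmx A *m ghat g) *m gam); last by rewrite /Mphi !mulmxA.
  by rewrite !det_mulmx det_tr dgam mul1r mulr1.
rewrite ghatE row'_col'_mul -/B.
have hc : cofactor B ord_max ord_max = \det (row' ord_max (col' ord_max B)).
  by rewrite /cofactor addnn -muln2 exprM sqrr_sign mul1r.
have ha : \adj B ord_max ord_max = cofactor B ord_max ord_max by rewrite mxE.
rewrite -hc -ha.
have -> : \adj B = \det B *: invmx B.
  by rewrite /invmx uB scalerA mulfV ?scale1r // -unitfE -unitmxE.
rewrite mxE dB iB /qform /tau trmx_mul trmx_inv trmxK e_lastE.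
congr (_ * _).
rewrite trmx_delta !mulmxA.
rewrite (_ : _ *m _ = col ord_max (row ord_max (invmx G *m A *m invmx G^T))); last first.
  by rewrite colE rowE !mulmxA.
by rewrite [RHS]mxE [RHS]mxE.
Qed.
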